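(* Let $G=(V(G),E(G))$ be a finite connected graph with $N$ vertices, and attach to each vertex an $N$-level system $\mathbb{C}^N$. Let $H=\sum_{(i,j)\in E(G)}J_{ij}P_{ij}$ with all couplings $J_{ij}>0$. Then the ground state of $H$ is the $N$-singlet $|S^{(N)}_N\rangle$.
   Context: $P_{ij}$ is the swap operator on $(\mathbb{C}^N)^{\otimes N}$ exchanging tensor factors $i$ and $j$. Fix an orthonormal basis $\{|\alpha_k\rangle\}_{k=1}^N$ of $\mathbb{C}^N$. The $N$-singlet is $$|S^{(N)}_N\rangle=\frac{1}{\sqrt{N!}}\sum_{\pi\in S_N}\operatorname{sgn}(\pi)\,|\alpha_{\pi(1)},\dots,\alpha_{\pi(N)}\rangle,$$ the totally antisymmetric state: it satisfies $P_{ij}|S^{(N)}_N\rangle=-|S^{(N)}_N\rangle$ for all $i\ne j$. Up to a global phase it does not depend on the chosen basis, and $U^{\otimes N}|S^{(N)}_N\rangle=|S^{(N)}_N\rangle$ up to a phase for every unitary $U$ on $\mathbb{C}^N$. *)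

(* Defs.v *)
From HB Require Import structures.
From mathcomp Require Import all_boot all_order all_algebra all_fingroup.
Set Implicit Arguments. Unset Strict Implicit. Unset Printing Implicit Defensive.
Import Order.TTheory GRing.Theory Num.Theory.
Local Open Scope ring_scope.

(* A computational basis configuration of (C^N)^{\otimes N}:
   site k (k : 'I_N) is in level c k (the basis vector alpha_{c k}). *)
Definition config (N : nat) := {ffun 'I_N -> 'I_N}.

(* States are row vectors indexed by (an enumeration of) the configurations. *)
Notation dimH N := #|config N|.

Definition swapc (N : nat) (i j : 'I_N) (c : config N) : config N :=
  [ffun k => c (tperm i j k)].

(* The swap operator P_ij as a matrix (acting on row vectors by v *m P). *)
Definition swap_mx (C : numClosedFieldType) (N : nat) (i j : 'I_N)
  : 'M[C]_(dimH N) :=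
  \matrix_(x, y) ((enum_val y == swapc i j (enum_val x))%:R).

(* H = sum over edges {i,j} (each unordered edge once, i < j) of J_ij P_ij. *)
Definition hamiltonian (C : numClosedFieldType) (N : nat) (e : rel 'I_N)
  (J : 'I_N -> 'I_N -> C) : 'M[C]_(dimH N) :=
  \sum_(i < N) \sum_(j < N | (i < j)%N && e i j) J i j *: swap_mx C i j.

(* The N-singlet (1/sqrt(N!)) sum_pi sgn(pi) |alpha_{pi 1}, ..., alpha_{pi N}>,
   w.r.t. the standard basis alpha_k = e_k. *)
Definition singlet (C : numClosedFieldType) (N : nat) : 'rV[C]_(dimH N) :=
  \row_x ((sqrtC (N`!)%:R)^-1 *
          \sum_(s : 'S_N)
            (if enum_val x == [ffun k => s k] then (-1) ^+ odd_perm s else 0)).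

Definition ground_state (C : numClosedFieldType) (n : nat) (H : 'M[C]_n)
  (v : 'rV[C]_n) : Prop :=
  v != 0 /\ exists E : C, v *m H = E *: v /\ forall a, eigenvalue H a -> E <= a.

(* Main.v *)
Require Import Defs.
From HB Require Import structures.
From mathcomp Require Import all_boot all_order all_algebra all_fingroup.
Import Order.TTheory GRing.Theory Num.Theory.
Local Open Scope ring_scope.
Set Implicit Arguments. Unset Strict Implicit. Unset Printing Implicit Defensive.

Definition sig (N : nat) (i j : 'I_N) (y : 'I_(dimH N)) : 'I_(dimH N) :=
  enum_rank (swapc i j (enum_val y)).

Lemma swapcK N (i j : 'I_N) : involutive (swapc i j).
Proof. by move=> c; apply/ffunP => k; rewrite !ffunE tpermK. Qed.

Lemma sigK N (i j : 'I_N) : involutive (sig i j).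
Proof. by move=> y; rewrite /sig enum_rankK swapcK enum_valK. Qed.

Lemma swap_mxE (C : numClosedFieldType) N (i j : 'I_N) (v : 'rV[C]_(dimH N)) y :
  (v *m swap_mx C i j) 0 y = v 0 (sig i j y).
Proof.
rewrite mxE (bigD1 (sig i j y)) //= mxE /sig enum_rankK swapcK eqxx mulr1.
rewrite big1 ?addr0 // => x /negbTE nx; rewrite mxE.
case: eqP => h; last by rewrite mulr0.
by move: nx; rewrite h swapcK enum_valK eqxx.
Qed.

Lemma hamE (C : numClosedFieldType) N (e : rel 'I_N) (J : 'I_N -> 'I_N -> C)
  (v : 'rV[C]_(dimH N)) y :
  (v *m hamiltonian e J) 0 y =
  \sum_(i < N) \sum_(j < N | (i < j)%N && e i j) J i j * v 0 (sig i j y).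
Proof.
rewrite /hamiltonian mulmx_sumr summxE; apply: eq_bigr => i _.
rewrite mulmx_sumr summxE; apply: eq_bigr => j _.
by rewrite -scalemxAr mxE swap_mxE.
Qed.

Definition qf (C : numClosedFieldType) n (f : 'I_n -> C) := \sum_x f x * (f x)^*.

Lemma qf_ge0 (C : numClosedFieldType) n (f : 'I_n -> C) : 0 <= qf f.
Proof. by apply: sumr_ge0 => x _; apply: mul_conjC_ge0. Qed.

Lemma qf_eq0 (C : numClosedFieldType) n (f : 'I_n -> C) : qf f = 0 -> forall x, f x = 0.
Proof.
move=> h x; apply/eqP; rewrite -mul_conjC_eq0; apply/eqP.
by apply: (psumr_eq0P _ h) => // y _; apply: mul_conjC_ge0.
Qed.

Lemma qf_swap (C : numClosedFieldType) n (f : 'I_n -> C) (s : 'I_n -> 'I_n) :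
  involutive s ->
  qf (fun x => f x + f (s x)) = 2 * (qf f + \sum_x f (s x) * (f x)^*).
Proof.
move=> sK; rewrite /qf.
have sI : injective s := can_inj sK.
have h1 : \sum_x f (s x) * (f (s x))^* = \sum_x f x * (f x)^*.
  by rewrite [RHS](reindex_inj sI).
have h2 : \sum_x f x * (f (s x))^* = \sum_x f (s x) * (f x)^*.
  by rewrite (reindex_inj sI); apply: eq_bigr => x _; rewrite sK.
under eq_bigr do rewrite rmorphD /= mulrDl !mulrDr.
rewrite !big_split /= h1 h2; set A := \sum_x _; set B := \sum_x _.
by rewrite mulrDl !mul1r; rewrite -!addrA; congr (_ + _); rewrite addrC -!addrA addrCA.
Qed.

Definition E0 (C : numClosedFieldType) N (e : rel 'I_N) (J : 'I_N -> 'I_N -> C) :=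
  - \sum_(i < N) \sum_(j < N | (i < j)%N && e i j) J i j.

Lemma key (C : numClosedFieldType) N (e : rel 'I_N) (J : 'I_N -> 'I_N -> C)
  (v : 'rV[C]_(dimH N)) a :
  v *m hamiltonian e J = a *: v ->
  2 * ((a - E0 e J) * qf (v 0)) =
  \sum_(i < N) \sum_(j < N | (i < j)%N && e i j)
     J i j * qf (fun x => v 0 x + v 0 (sig i j x)).
Proof.
move=> hv.
under eq_bigr => i _ do under eq_bigr => j _ do rewrite (qf_swap (v 0) (@sigK N i j)) mulrCA mulrDr.
under eq_bigr do rewrite -mulr_sumr big_split /=.
rewrite -mulr_sumr big_split /=; congr (_ * _).
rewrite /E0 opprK mulrDl addrC; congr (_ + _); last first.
  by rewrite mulr_suml; apply: eq_bigr => i _; rewrite mulr_suml.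
have ha : forall y, a * v 0 y =
   \sum_(i < N) \sum_(j < N | (i < j)%N && e i j) J i j * v 0 (sig i j y).
  by move=> y; rewrite -hamE hv mxE.
rewrite /qf mulr_sumr.
transitivity (\sum_y (\sum_(i < N) \sum_(j < N | (i < j)%N && e i j)
      J i j * v 0 (sig i j y)) * (v 0 y)^*).
  by apply: eq_bigr => y _; rewrite mulrA ha.
under [LHS]eq_bigr => y _ do rewrite mulr_suml.
rewrite exchange_big; apply: eq_bigr => i _.
under eq_bigr do rewrite mulr_suml.
rewrite exchange_big; apply: eq_bigr => j _.
by rewrite mulr_sumr; apply: eq_bigr => y _; rewrite mulrA.
Qed.

Lemma qf_gt0 (C : numClosedFieldType) n (v : 'rV[C]_n) : v != 0 -> 0 < qf (v 0).
Proof.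
move=> nv; rewrite lt_def qf_ge0 andbT eq_sym; apply: contra nv => /eqP h.
by apply/eqP/matrixP => i x; rewrite ord1 mxE (qf_eq0 (esym h)).
Qed.

Lemma rhs_ge0 (C : numClosedFieldType) N (e : rel 'I_N) (J : 'I_N -> 'I_N -> C)
  (J_pos : forall i j, e i j -> 0 < J i j) (F : 'I_N -> 'I_N -> 'I_(dimH N) -> C) :
  0 <= \sum_(i < N) \sum_(j < N | (i < j)%N && e i j) J i j * qf (F i j).
Proof.
apply: sumr_ge0 => i _; apply: sumr_ge0 => j /andP[_ eij].
by rewrite mulr_ge0 ?qf_ge0 // ltW // J_pos.
Qed.

Lemma lower (C : numClosedFieldType) N (e : rel 'I_N) (J : 'I_N -> 'I_N -> C)
  (J_pos : forall i j, e i j -> 0 < J i j) (v : 'rV[C]_(dimH N)) a :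
  v != 0 -> v *m hamiltonian e J = a *: v -> E0 e J <= a.
Proof.
move=> nv hv; have := rhs_ge0 J_pos (fun i j x => v 0 x + v 0 (sig i j x)).
rewrite -(key hv) pmulr_rge0 ?ltr0n // pmulr_lge0 ?qf_gt0 //.
by rewrite subr_ge0.
Qed.

Lemma uniq_edge (C : numClosedFieldType) N (e : rel 'I_N) (e_sym : symmetric e)
  (e_irr : irreflexive e) (J : 'I_N -> 'I_N -> C)
  (J_pos : forall i j, e i j -> 0 < J i j) (v : 'rV[C]_(dimH N)) :
  v *m hamiltonian e J = E0 e J *: v ->
  forall i j, e i j -> forall c,
    v 0 (enum_rank (swapc i j c)) = - v 0 (enum_rank c).
Proof.
move=> hv; have := key hv; rewrite subrr mul0r mulr0 => /esym h0.
have H1 : forall i j : 'I_N, (i < j)%N -> e i j -> forall c,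
    v 0 (enum_rank (swapc i j c)) = - v 0 (enum_rank c).
  move=> i j lij eij c.
  have hge : forall i0 j0 : 'I_N, (i0 < j0)%N && e i0 j0 ->
      0 <= J i0 j0 * qf (fun x => v 0 x + v 0 (sig i0 j0 x)).
    by move=> i0 j0 /andP[_ e0]; rewrite mulr_ge0 ?qf_ge0 // ltW // J_pos.
  have hi := @psumr_eq0P _ _ _ _ (fun i0 _ => sumr_ge0 _ (hge i0)) h0 i isT.
  have := @psumr_eq0P _ _ _ _ (hge i) hi j; rewrite lij eij => /(_ isT) /eqP; rewrite mulf_eq0 gt_eqF ?J_pos //= => /eqP hq.
  have := qf_eq0 hq (enum_rank c); rewrite /sig enum_rankK => /eqP.
  by rewrite addrC addr_eq0 => /eqP.
move=> i j eij c; case: (ltngtP i j) => [lij|lji|/val_inj eq]; first exact: H1.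
  have -> : swapc i j c = swapc j i c by apply/ffunP => k; rewrite !ffunE tpermC.
  by apply: H1; rewrite // e_sym.
by move: eij; rewrite eq e_irr.
Qed.

Definition antiP (C : numClosedFieldType) N (g : config N -> C) (i j : 'I_N) :=
  forall c, g (swapc i j c) = - g c.

Lemma tperm_conj N (i j k : 'I_N) : i != k -> j != k -> i != j ->
  forall x, tperm i j x = tperm i k (tperm k j (tperm i k x)).
Proof.
move=> ik jk ij x.
have -> : tperm i j = (tperm k j ^ tperm i k)%g.
  by rewrite tpermJ tpermR tpermD // eq_sym.
by rewrite conjgE tpermV !permM.
Qed.

Lemma antiP_trans (C : numClosedFieldType) N (g : config N -> C) (i j k : 'I_N) :
  i != k -> j != k -> i != j -> antiP g i k -> antiP g k j -> antiP g i j.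
Proof.
move=> ik jk ij hik hkj c.
have -> : swapc i j c = swapc i k (swapc k j (swapc i k c)).
  by apply/ffunP => x; rewrite !ffunE (tperm_conj ik jk ij).
by rewrite hik hkj hik !opprK.
Qed.

Lemma anti_path (C : numClosedFieldType) N (e : rel 'I_N) (e_irr : irreflexive e)
  (g : config N -> C) (he : forall i j, e i j -> antiP g i j) :
  forall p x, path e x p -> x = last x p \/ antiP g x (last x p).
Proof.
elim=> [|y p IH] x /=; first by left.
case/andP=> exy hp.
have [yz|yz] := eqVneq y (last y p).
  by right; rewrite -yz; apply: he.
case: (IH _ hp) => [yz'|hyz]; first by rewrite -yz' eqxx in yz.
have xy : x != y by apply: contraTneq exy => ->; rewrite e_irr.
have [xz|xz] := eqVneq x (last y p); first by left.
by right; apply: (antiP_trans xy _ xz (he _ _ exy) hyz); rewrite eq_sym.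
Qed.

Lemma anti_all (C : numClosedFieldType) N (e : rel 'I_N) (e_irr : irreflexive e)
  (e_conn : forall x y : 'I_N, connect e x y)
  (g : config N -> C) (he : forall i j, e i j -> antiP g i j) :
  forall i j, i != j -> antiP g i j.
Proof.
move=> i j ij; case/connectP: (e_conn i j) => p hp jl.
case: (anti_path e_irr he hp); rewrite -jl //.
by move=> eq; rewrite eq eqxx in ij.
Qed.

Definition actc N (s : {perm 'I_N}) (c : config N) : config N := [ffun k => c (s k)].

Lemma anti_sign (C : numClosedFieldType) N (g : config N -> C)
  (ha : forall i j, i != j -> antiP g i j) :
  forall s c, g (actc s c) = (-1) ^+ odd_perm s * g c.
Proof.
move=> s c; case: (prod_tpermP s) => ts -> _.
elim: ts => [|t ts IH].
  rewrite big_nil odd_perm1 expr0 mul1r; congr g.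
  by apply/ffunP => k; rewrite !ffunE perm1.
rewrite big_cons.
have -> : actc (tperm t.1 t.2 * \prod_(t0 <- ts) tperm t0.1 t0.2)%g c =
          swapc t.1 t.2 (actc (\prod_(t0 <- ts) tperm t0.1 t0.2)%g c).
  by apply/ffunP => k; rewrite !ffunE permM.
have [eq|ne] := eqVneq t.1 t.2.
  have -> : swapc t.1 t.2 (actc (\prod_(t0 <- ts) tperm t0.1 t0.2)%g c) =
            actc (\prod_(t0 <- ts) tperm t0.1 t0.2)%g c.
    by apply/ffunP => k; rewrite !ffunE eq tperm1 perm1.
  by rewrite IH eq tperm1 mul1g.
by rewrite ha // IH odd_mul_tperm ne signr_addb expr1 mulN1r mulNr.
Qed.

Definition Ssum (C : numClosedFieldType) N (c : config N) : C :=
  \sum_(s : 'S_N) (if c == [ffun k => s k] then (-1) ^+ odd_perm s else 0).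

Lemma singletE (C : numClosedFieldType) N x :
  singlet C N 0 x = (sqrtC (N`!)%:R)^-1 * Ssum C (enum_val x).
Proof. by rewrite mxE. Qed.

Lemma ffun_perm_inj N (s t : 'S_N) :
  ([ffun k => s k] == [ffun k => t k] :> config N) = (s == t).
Proof.
apply/eqP/eqP => [h|->] //; apply/permP => k.
by have := congr1 (fun f : config N => f k) h; rewrite !ffunE.
Qed.

Lemma Ssum_perm (C : numClosedFieldType) N (s : 'S_N) :
  Ssum C [ffun k => s k] = (-1) ^+ odd_perm s.
Proof.
rewrite /Ssum (bigD1 s) //= eqxx big1 ?addr0 // => t /negbTE ts.
by rewrite ffun_perm_inj eq_sym ts.
Qed.

Lemma Ssum_noninj (C : numClosedFieldType) N (c : config N) :
  ~~ injectiveb c -> Ssum C c = 0.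
Proof.
case/injectivePn => x [y xy cxy]; rewrite /Ssum big1 // => s _.
case: eqP => // hc; move: cxy; rewrite hc !ffunE => /perm_inj exy.
by rewrite exy eqxx in xy.
Qed.

Lemma Ssum_anti (C : numClosedFieldType) N (i j : 'I_N) (c : config N) :
  i != j -> Ssum C (swapc i j c) = - Ssum C c.
Proof.
move=> ij; rewrite /Ssum (reindex_inj (mulgI (tperm i j))) /= -sumrN.
apply: eq_bigr => s _.
have -> : [ffun k => (tperm i j * s)%g k] = swapc i j [ffun k => s k].
  by apply/ffunP => k; rewrite !ffunE permM.
rewrite (inj_eq (can_inj (@swapcK N i j))) odd_mul_tperm ij signr_addb expr1 mulN1r.
by case: ifP; rewrite ?oppr0.
Qed.

Lemma sqrt_fact_neq0 (C : numClosedFieldType) N : sqrtC (N`!)%:R != 0 :> C.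
Proof. by rewrite sqrtC_eq0 pnatr_eq0 -lt0n fact_gt0. Qed.

Lemma singlet_neq0 (C : numClosedFieldType) N : singlet C N != 0.
Proof.
apply/eqP => /matrixP /(_ 0 (enum_rank [ffun k => (1%g : 'S_N) k])).
rewrite singletE enum_rankK Ssum_perm odd_perm1 expr0 mulr1 mxE => /eqP.
by rewrite invr_eq0 (negbTE (sqrt_fact_neq0 C N)).
Qed.

Lemma singlet_eigen (C : numClosedFieldType) N (e : rel 'I_N) (e_irr : irreflexive e)
  (J : 'I_N -> 'I_N -> C) :
  singlet C N *m hamiltonian e J = E0 e J *: singlet C N.
Proof.
apply/matrixP => a y; rewrite ord1 hamE mxE /E0 mulNr mulr_suml -sumrN.
apply: eq_bigr => i _; rewrite mulr_suml -sumrN; apply: eq_bigr => j /andP[lij eij].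
have ij : i != j by apply: contraTneq eij => ->; rewrite e_irr.
rewrite /sig !singletE enum_rankK Ssum_anti //.
by rewrite !mulrN.
Qed.

Lemma prop_singlet (C : numClosedFieldType) N (v : 'rV[C]_(dimH N))
  (ha : forall i j, i != j -> antiP (fun c => v 0 (enum_rank c)) i j) :
  v = (v 0 (enum_rank [ffun k : 'I_N => k]) * sqrtC (N`!)%:R) *: singlet C N.
Proof.
have sq := sqrt_fact_neq0 C N.
apply/matrixP => a x; rewrite ord1 mxE singletE.
have vx : v 0 x = v 0 (enum_rank (enum_val x)) by rewrite enum_valK.
case: (injectiveP (enum_val x)) => [inj|ninj].
  have [s hc hc'] : exists2 s : 'S_N, enum_val x = actc s [ffun k => k] &
      enum_val x = [ffun k => s k].
    by exists (perm inj); apply/ffunP => k; rewrite !ffunE permE.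
  rewrite vx hc (anti_sign ha) -hc hc' Ssum_perm.
  by rewrite mulrA mulfK // mulrC.
have h0 : Ssum C (enum_val x) = 0 by apply: Ssum_noninj; apply/injectiveP.
rewrite h0 !mulr0 vx.
have : ~~ injectiveb (enum_val x) by apply/injectiveP.
case/injectivePn => i [j ij cij].
have hs : swapc i j (enum_val x) = enum_val x.
  apply/ffunP => k; rewrite ffunE; case: tpermP => // ->; by rewrite cij.
have := ha i j ij (enum_val x); rewrite hs => /eqP.
by rewrite -subr_eq0 opprK -mulr2n mulrn_eq0 /= => /eqP.
Qed.

Unset Implicit Arguments. Set Strict Implicit.

Theorem theorem1 (C : numClosedFieldType) (N : nat) (HN : (0 < N)%N)
  (e : rel 'I_N) (e_sym : symmetric e) (e_irr : irreflexive e)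
  (e_conn : forall x y : 'I_N, connect e x y)
  (J : 'I_N -> 'I_N -> C) (J_pos : forall i j, e i j -> 0 < J i j) :
  forall v : 'rV[C]_(dimH N),
    ground_state (hamiltonian e J) v <->
    exists c : C, c != 0 /\ v = c *: singlet C N.
Proof.
move=> v; split.
  case=> nv [E [hv hle]].
  have hE0 : E <= E0 e J.
    apply: hle; apply/eigenvalueP; exists (singlet C N).
      exact: singlet_eigen.
    exact: singlet_neq0.
  have hE0' : E0 e J <= E := lower J_pos nv hv.
  have EE : E = E0 e J by apply/le_anti; rewrite hE0 hE0'.
  rewrite EE in hv.
  have he := uniq_edge e_sym e_irr J_pos hv.
  have ha := anti_all e_irr e_conn he.
  exists (v 0 (enum_rank [ffun k : 'I_N => k]) * sqrtC (N`!)%:R); split;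
    last exact: prop_singlet ha.
  by apply: contra nv => /eqP h; rewrite (prop_singlet ha) h scale0r.
case=> c [nc ->]; split.
  by rewrite scaler_eq0 negb_or nc singlet_neq0.
exists (E0 e J); split.
  by rewrite -scalemxAl (singlet_eigen e_irr J) !scalerA mulrC.
move=> a /eigenvalueP [w hw nw].
exact: (lower J_pos nw hw).
Qed.
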